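(* Let $A^+,A^-\in\mathbb{R}_{\max}^{m\times n}$, $C\in\mathbb{R}_{\max}^{p\times n}$, $\mu^+\in\mathbb{Z}_{\ge0}^p$, $\mu^-\in\mathbb{Z}_{\ge0}^n$ satisfy the standing assumptions below, and let $f$ and $S$ be as defined below. If $x\in S\cap\mathbb{R}^n$ is not a local optimum, then there exist $J\subset[n]$ and $\delta'>0$ such that $x+\delta\chi_J\in S$ and $f(x+\delta\chi_J)<f(x)$ for all $0<\delta<\delta'$.
   Context: $\mathbb{R}_{\max}=\mathbb{R}\cup\{-\infty\}$, $[n]=\{1,\dots,n\}$, and $\chi_J\in\{0,1\}^n$ is the indicator vector of $J$. Write $A^\pm=(a^\pm_{i,j})$, $C=(c_{k,j})$, and $A=(a_{i,j})$ with $a_{i,j}=\max(a^+_{i,j},a^-_{i,j})$. The objective is $f(x)=\sum_{k=1}^p\mu^+_k\max_{j\in[n]}(c_{k,j}+x_j)-\sum_{j=1}^n\mu^-_jx_j$, and the feasible set is $S=\{x\in\mathbb{R}_{\max}^n:\max_j(a^+_{i,j}+x_j)\ge\max_j(a^-_{i,j}+x_j)\text{ for all }i\in[m]\}$. Standing assumptions: every row of $A$ and of $C$ contains a finite entry; $\sum_{k}\mu^+_k=\sum_j\mu^-_j$; the undirected graph with vertex set $\{u_1,\dots,u_p\}\cup[n]\cup\{w_1,\dots,w_m\}$ and edges $\{u_k,j\}$ for $c_{k,j}\ne-\infty$ and $\{w_i,j\}$ for $a_{i,j}\ne-\infty$ is connected. A point $x\in S\cap\mathbb{R}^n$ is a local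 optimum if there is $\delta>0$ such that $f(y)\ge f(x)$ for all $y\in S\cap\mathbb{R}^n$ with $\max_j|x_j-y_j|<\delta$. *)

(* Defs.v *)
From HB Require Import structures.
From mathcomp Require Import all_boot all_order all_algebra.
From mathcomp Require Import reals constructive_ereal.
Set Implicit Arguments. Unset Strict Implicit. Unset Printing Implicit Defensive.
Import Order.TTheory GRing.Theory Num.Theory.
Local Open Scope ring_scope.
Local Open Scope ereal_scope.

Section Defs.
Variable R : realType.

(* an entry of R_max = R ∪ {-oo} *)
Definition rmax_entry (a : \bar R) : Prop := a != +oo.

Definition rowmax {m n : nat} (M : 'M[\bar R]_(m, n)) (x : 'I_n -> R) (i : 'I_m)
  : \bar R := \big[Order.max/-oo]_(j < n) (M i j + (x j)%:E).

Definition Amax {m n : nat} (Ap Am : 'M[\bar R]_(m, n)) : 'M[\bar R]_(m, n) :=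
  \matrix_(i, j) Order.max (Ap i j) (Am i j).

Definition inS {m n : nat} (Ap Am : 'M[\bar R]_(m, n)) (x : 'I_n -> R) : Prop :=
  forall i : 'I_m, rowmax Am x i <= rowmax Ap x i.

(* the objective; rows of C have a finite entry, so each max is finite *)
Definition fobj {p n : nat} (C : 'M[\bar R]_(p, n)) (mup : 'I_p -> nat)
  (mum : 'I_n -> nat) (x : 'I_n -> R) : R :=
  (\sum_(k < p) (mup k)%:R * fine (rowmax C x k)
   - \sum_(j < n) (mum j)%:R * x j)%R.

Definition local_opt {m n p : nat} (Ap Am : 'M[\bar R]_(m, n))
  (C : 'M[\bar R]_(p, n)) (mup : 'I_p -> nat) (mum : 'I_n -> nat)
  (x : 'I_n -> R) : Prop :=
  inS Ap Am x /\
  exists delta : R, (0 < delta)%R /\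
    forall y : 'I_n -> R, inS Ap Am y ->
      (forall j, `|x j - y j| < delta)%R ->
      (fobj C mup mum x <= fobj C mup mum y)%R.

Definition chi {n : nat} (J : {set 'I_n}) (j : 'I_n) : R :=
  if j \in J then 1%R else 0%R.

End Defs.

(* vertices u_k, j, w_i of the bipartite graph *)
Definition vert (p n m : nat) : finType := (('I_p + 'I_n) + 'I_m)%type.

Definition graph_edge (R : realType) {m n p : nat} (A : 'M[\bar R]_(m, n))
  (C : 'M[\bar R]_(p, n)) : rel (vert p n m) :=
  fun u v =>
    match u, v with
    | inl (inl k), inl (inr j) => C k j != -oo
    | inl (inr j), inl (inl k) => C k j != -oo
    | inr i, inl (inr j) => A i j != -oo
    | inl (inr j), inr i => A i j != -oo
    | _, _ => false
    end.

Definition graph_connected (R : realType) {m n p : nat} (A : 'M[\bar R]_(m, n))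
  (C : 'M[\bar R]_(p, n)) : Prop :=
  forall u v : vert p n m, connect (graph_edge A C) u v.

(* Main.v *)
Require Import Defs.
From HB Require Import structures.
From mathcomp Require Import all_boot all_order all_algebra.
From mathcomp Require Import reals constructive_ereal ring lra.
From Stdlib Require Import Classical FunctionalExtensionality.
Import Order.TTheory GRing.Theory Num.Theory.
Local Open Scope ring_scope.

Section Aux.
Variable R : realType.

Lemma common_e (I : finType) (P : I -> R -> Prop) :
  (forall i e e', 0 < e' -> e' <= e -> P i e -> P i e') ->
  (forall i, exists e, 0 < e /\ P i e) -> exists e, 0 < e /\ forall i, P i e.
Proof.
move=> Pdn Pex.
suff [e [e0 He]] : exists e, 0 < e /\ forall i, i \in enum I -> P i e.
  by exists e; split=> // i; apply: He; rewrite mem_enum.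
elim: (enum I) => [|i s [e2 [e20 H2]]]; first by exists 1; split.
have [e1 [e10 H1]] := Pex i.
exists (Num.min e1 e2); split; first by rewrite lt_min e10 e20.
move=> j; rewrite inE => /orP[/eqP->|js].
  by apply: (Pdn _ e1) => //; [rewrite lt_min e10 e20|rewrite ge_min lexx].
by apply: (Pdn _ e2) => //; [rewrite lt_min e10 e20|rewrite ge_min lexx orbT|apply: H2].
Qed.

Variable n : nat.

Definition bmax (F : 'I_n -> \bar R) : \bar R := \big[Order.max/-oo%E]_(j < n) F j.

Lemma bmax_ge F j : (F j <= bmax F)%E.
Proof. exact: le_bigmax. Qed.

Lemma bmax_le F y : (forall j, F j <= y)%E -> (bmax F <= y)%E.
Proof. by move=> H; apply: bigmax_le => //; exact: leNye. Qed.

Lemma bmax_eq F y : (forall j, F j <= y)%E -> (exists j, F j = y) -> bmax F = y.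
Proof.
by move=> H [j Fj]; apply/le_anti; rewrite bmax_le //= -Fj bmax_ge.
Qed.

Lemma bmax_cases F : bmax F = -oo%E \/ exists j, bmax F = F j.
Proof.
case: (pickP (fun _ : 'I_n => true)) => [j0 _|h].
  right; have [i _ E] := @eq_bigmax _ _ _ (-oo%E) j0 (fun _ => true) F isT (fun i _ => leNye _).
  by exists i; exact: E.
by left; apply: bigmax_eq_id => i; rewrite h.
Qed.

Definition hmax (P : pred 'I_n) (d : 'I_n -> R) : R :=
  fine (\big[Order.max/-oo%E]_(j | P j) (d j)%:E).
Definition ismax (P : pred 'I_n) (d : 'I_n -> R) (h : R) :=
  (exists2 j, P j & h = d j) /\ (forall j, P j -> d j <= h).

Lemma hmaxP (P : pred 'I_n) (d : 'I_n -> R) j0 : P j0 -> ismax P d (hmax P d).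
Proof.
move=> Pj0.
have [i Pi E] := @eq_bigmax _ _ _ (-oo%E) j0 P (fun j => (d j)%:E) Pj0 (fun i _ => leNye _).
rewrite /ismax /hmax E /=; split; first by exists i.
move=> j Pj; rewrite -lee_fin -E; exact: le_bigmax_cond.
Qed.

Lemma ismax_uniq (P : pred 'I_n) (d : 'I_n -> R) h1 h2 : ismax P d h1 -> ismax P d h2 -> h1 = h2.
Proof.
move=> [[j1 P1 ->] H1] [[j2 P2 ->] H2]; apply/le_anti.
by rewrite H2 // H1.
Qed.

Lemma hmax_eq (P : pred 'I_n) (d : 'I_n -> R) h : ismax P d h -> hmax P d = h.
Proof. move=> H; case: (H) => [[j Pj _] _]; exact: ismax_uniq (hmaxP P d j Pj) H. Qed.

End Aux.
Arguments bmax {R n}. Arguments hmax {R n}. Arguments ismax {R n}.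
Arguments bmax_ge {R n}. Arguments bmax_le {R n}. Arguments bmax_eq {R n}.
Arguments bmax_cases {R n}. Arguments hmaxP {R n}. Arguments ismax_uniq {R n}. Arguments hmax_eq {R n}.

Section Row.
Variable R : realType.
Variable n : nat.
Local Open Scope ereal_scope.

Lemma row_local (a : 'I_n -> \bar R) (x : 'I_n -> R) (r : R) :
  (forall j, a j != +oo) ->
  bmax (fun j => a j + (x j)%:E) = r%:E ->
  exists e, (0 < e)%R /\ forall y : 'I_n -> R, (forall j, `|y j - x j| < e)%R ->
    bmax (fun j => a j + (y j)%:E) =
      (r + hmax (fun j => a j + (x j)%:E == bmax (fun j => a j + (x j)%:E))
                (fun j => y j - x j))%:E.
Proof.
move=> afin E.
have [e [e0 He]] : exists e, (0 < e)%R /\ forall j, (a j = -oo \/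
     (a j + (x j)%:E == r%:E) \/ exists s, a j = s%:E /\ (s + x j + 2 * e <= r)%R).
  apply: (@common_e R _ (fun j e => a j = -oo \/
     (a j + (x j)%:E == r%:E) \/ exists s, a j = s%:E /\ (s + x j + 2 * e <= r)%R)).
  - move=> j e e' e'0 lee' [->|[Nj|[s [Es H]]]]; [by left|by right;left|].
    by right; right; exists s; split=> //; lra.
  - move=> j; have := bmax_ge (fun j => a j + (x j)%:E) j; rewrite E /=.
    have := afin j.
    case Ea: (a j) => [s| |] //= _ Hs.
    + rewrite -EFinD lee_fin in Hs.
      have [Heq|Hne] := eqVneq (s + x j)%R r.
        by exists 1%R; split=> //; right; left; rewrite -EFinD Heq.
      have Hlt : (s + x j < r)%R by rewrite lt_neqAle Hne Hs.
      exists ((r - (s + x j)) / 2)%R; split; first by lra.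
      by right; right; exists s; split=> //; lra.
    + by exists 1%R; split=> //; left.
exists e; split=> // y Hy.
rewrite E.
have [j0 Ej0] : exists j0, a j0 + (x j0)%:E = r%:E.
  case: (bmax_cases (fun j => a j + (x j)%:E)) => [|[j Ej]]; first by rewrite E.
  by exists j; rewrite -Ej.
have := hmaxP (fun j => a j + (x j)%:E == r%:E) (fun j => (y j - x j)%R) j0 (introT eqP Ej0).
move: (hmax _ _) => h [[j1 Nj1 hj1] Hh].
have Hy1 := Hy j1; rewrite ltr_norml in Hy1.
apply: bmax_eq.
- move=> j; case: (He j) => [Ea|[Nj|[s [Ea Hs]]]].
  + by rewrite Ea addNye leNye.
  + have := Hh j Nj; move: Nj; have := afin j.
    case Ea: (a j) => [s| |] //= _.
      rewrite -EFinD eqe => /eqP Hs Hd; rewrite -EFinD lee_fin; lra.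
  + rewrite Ea -EFinD lee_fin.
    have := Hy j; rewrite ltr_norml => Hyj.
    move: Hy1 Hyj; rewrite hj1; lra.
- exists j1; move: Nj1; have := afin j1.
  case Ea: (a j1) => [s| |] //= _.
  by rewrite -EFinD eqe => /eqP Hs; rewrite -EFinD hj1; congr (_%:E); lra.
Qed.

End Row.
Arguments row_local {R n}.

Lemma minle1 (R : realType) (a b : R) : Num.min a b <= a.
Proof. by rewrite ge_min lexx. Qed.
Lemma minle2 (R : realType) (a b : R) : Num.min a b <= b.
Proof. by rewrite ge_min lexx orbT. Qed.
Lemma minpos (R : realType) (a b : R) : 0 < a -> 0 < b -> 0 < Num.min a b.
Proof. by move=> ha hb; rewrite lt_min ha hb. Qed.

Section Main.
Variables (R : realType) (m n p : nat) (Ap Am : 'M[\bar R]_(m, n)) (C : 'M[\bar R]_(p, n))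
  (mup : 'I_p -> nat) (mum : 'I_n -> nat) (x : 'I_n -> R).
Hypothesis Apfin : forall i j, Ap i j != +oo%E.
Hypothesis Amfin : forall i j, Am i j != +oo%E.
Hypothesis Cfin : forall k j, C k j != +oo%E.
Hypothesis Crow : forall k, exists j, C k j != -oo%E.
Hypothesis Hsum : (\sum_(k < p) mup k = \sum_(j < n) mum j)%N.
Hypothesis xS : inS Ap Am x.

Lemma rowmaxE (q : nat) (M : 'M[\bar R]_(q, n)) y i :
  rowmax M y i = bmax (fun j => M i j + (y j)%:E)%E.
Proof. by []. Qed.

Lemma bmax_fin (a : 'I_n -> \bar R) (y : 'I_n -> R) : (forall j, a j != +oo%E) ->
  bmax (fun j => a j + (y j)%:E)%E != -oo%E ->
  exists r, bmax (fun j => a j + (y j)%:E)%E = r%:E.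
Proof.
move=> afin; case: (bmax_cases (fun j => a j + (y j)%:E)%E) => [->|[j ->]] //.
have := afin j; case: (a j) => [s| |] //= _ _.
by exists (s + y j); rewrite EFinD.
Qed.

Definition NC k : pred 'I_n := fun j => (C k j + (x j)%:E == rowmax C x k)%E.
Definition g (d : 'I_n -> R) : R :=
  \sum_(k < p) (mup k)%:R * hmax (NC k) d - \sum_(j < n) (mum j)%:R * d j.
Definition Kmem_i i (d : 'I_n -> R) : Prop :=
  rowmax Am x i = rowmax Ap x i -> rowmax Ap x i != -oo%E ->
  forall j, (Am i j + (x j)%:E == rowmax Am x i)%E ->
  exists2 j', (Ap i j' + (x j')%:E == rowmax Ap x i)%E & d j <= d j'.
Definition Kmem d := forall i, Kmem_i i d.

Lemma Cval k : exists r, rowmax C x k = r%:E.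
Proof.
apply: (@bmax_fin (fun j => C k j) x (Cfin k)).
have [j Cj] := Crow k.
have := bmax_ge (fun j => C k j + (x j)%:E)%E j.
have := Cfin k j; move: Cj; case: (C k j) => [s| |] //= _ _ H.
apply/negP => /eqP E; move: H; rewrite E.
by rewrite leeNy_eq.
Qed.

Lemma NCne k : exists j, NC k j.
Proof.
have [r Er] := Cval k.
case: (bmax_cases (fun j => C k j + (x j)%:E)%E) => [E|[j Ej]].
  by move: Er; rewrite rowmaxE E.
by exists j; rewrite /NC rowmaxE Ej.
Qed.

Lemma hmax_bound (P : pred 'I_n) (d : 'I_n -> R) (e : R) : (exists j, P j) -> (forall j, `|d j| < e) ->
  `|hmax P d| < e.
Proof.
move=> [j0 Pj0] Hd; have [[j1 _ ->] _] := hmaxP P d j0 Pj0; exact: Hd.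
Qed.

Lemma F_local : exists e, 0 < e /\ forall y, (forall j, `|y j - x j| < e) ->
  fobj C mup mum y = fobj C mup mum x + g (fun j => y j - x j).
Proof.
have [e [e0 He]] : exists e, 0 < e /\ forall k y, (forall j, `|y j - x j| < e) ->
   fine (rowmax C y k) = fine (rowmax C x k) + hmax (NC k) (fun j => y j - x j).
  apply: (@common_e R _ (fun k e => forall y, (forall j, `|y j - x j| < e) ->
   fine (rowmax C y k) = fine (rowmax C x k) + hmax (NC k) (fun j => y j - x j))).
  - move=> k e e' e'0 lee' H y Hy; apply: H => j; exact: lt_le_trans (Hy j) lee'.
  - move=> k; have [r Er] := Cval k.
    have [e [e0 He]] := row_local (fun j => C k j) x r (Cfin k) Er.
    by exists e; split=> // y Hy; rewrite rowmaxE He // Er.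
exists e; split=> // y Hy.
rewrite /fobj /g.
rewrite (eq_bigr (fun k => (mup k)%:R * fine (rowmax C x k) +
    (mup k)%:R * hmax (NC k) (fun j => y j - x j))); last first.
  by move=> k _; rewrite He // mulrDr.
rewrite big_split /=.
rewrite (eq_bigr (fun j => (mum j)%:R * y j - (mum j)%:R * x j)
   (fun j _ => mulrBr _ _ _)) sumrB.
lra.
Qed.

Lemma S_local : exists e, 0 < e /\ forall y, (forall j, `|y j - x j| < e) ->
  (inS Ap Am y <-> Kmem (fun j => y j - x j)).
Proof.
have [e [e0 He]] : exists e, 0 < e /\ forall i y, (forall j, `|y j - x j| < e) ->
  ((rowmax Am y i <= rowmax Ap y i)%E <-> Kmem_i i (fun j => y j - x j)).
  apply: (@common_e R _ (fun i e => forall y, (forall j, `|y j - x j| < e) ->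
    ((rowmax Am y i <= rowmax Ap y i)%E <-> Kmem_i i (fun j => y j - x j)))).
  - move=> k e e' e'0 lee' H y Hy; apply: H => j; exact: lt_le_trans (Hy j) lee'.
  - move=> i; have Hi := xS i.
    have [Em|Nm] := eqVneq (rowmax Am x i) (-oo%E).
      exists 1; split=> // y Hy.
      have Emy : rowmax Am y i = -oo%E.
        apply/eqP; rewrite eq_le leNye andbT; apply: bmax_le => j.
        have := bmax_ge (fun j => Am i j + (x j)%:E)%E j; rewrite -rowmaxE Em.
        by have := Amfin i j; case: (Am i j) => [s| |] //=.
      rewrite Emy leNye; split=> // _ Eq Nf; exfalso.
      by move: Nf; rewrite -Eq Em.
    have [rm Erm] := bmax_fin (fun j => Am i j) x (Amfin i) Nm.
    have Rm : rowmax Am x i = rm%:E by rewrite rowmaxE.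
    have Np : rowmax Ap x i != -oo%E.
      by apply/negP => /eqP E; move: Hi; rewrite E Rm.
    have [rp Erp] := bmax_fin (fun j => Ap i j) x (Apfin i) Np.
    have Rp : rowmax Ap x i = rp%:E by rewrite rowmaxE.
    have [e1 [e10 He1]] := row_local (fun j => Am i j) x rm (Amfin i) Erm.
    have [e2 [e20 He2]] := row_local (fun j => Ap i j) x rp (Apfin i) Erp.
    have [jm Pjm] : exists j, (Am i j + (x j)%:E == rowmax Am x i)%E.
      case: (bmax_cases (fun j => Am i j + (x j)%:E)%E) => [E|[j Ej]].
        by move: Erm; rewrite E.
      by exists j; rewrite rowmaxE Ej.
    have [jp Pjp] : exists j, (Ap i j + (x j)%:E == rowmax Ap x i)%E.
      case: (bmax_cases (fun j => Ap i j + (x j)%:E)%E) => [E|[j Ej]].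
        by move: Np; rewrite rowmaxE E.
      by exists j; rewrite rowmaxE Ej.
    move: Hi; rewrite Rm Rp lee_fin le_eqVlt => /orP[/eqP Eq|Lt].
    + exists (Num.min e1 e2); split; first exact: minpos.
      move=> y Hy.
      rewrite !rowmaxE He1; last by move=> j; apply: (lt_le_trans (Hy j)); apply: minle1.
      rewrite He2; last by move=> j; apply: (lt_le_trans (Hy j)); apply: minle2.
      rewrite lee_fin Eq lerD2l.
      have [[j1 P1 h1] H1] := hmaxP (fun j => Am i j + (x j)%:E == bmax (fun j0 => Am i j0 + (x j0)%:E))%E (fun j => y j - x j) jm Pjm.
      have [[j2 P2 h2] H2] := hmaxP (fun j => Ap i j + (x j)%:E == bmax (fun j0 => Ap i j0 + (x j0)%:E))%E (fun j => y j - x j) jp Pjp.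
      split.
      * move=> le _ _ j Pj; exists j2 => //.
        by rewrite -h2; apply: le_trans le; apply: H1.
      * move=> K; have [] := K _ _ j1 P1.
        - by rewrite Rm Rp Eq.
        - by rewrite Rp.
        move=> j' Pj' le; rewrite h1; apply: le_trans le _; exact: H2.
    + exists (Num.min (Num.min e1 e2) ((rp - rm) / 2)); split.
        by apply: minpos; [exact: minpos|lra].
      move=> y Hy.
      have Hy0 : forall j, `|y j - x j| < Num.min e1 e2.
        by move=> j; apply: (lt_le_trans (Hy j)); apply: minle1.
      have Hy3 : forall j, `|y j - x j| < (rp - rm) / 2.
        by move=> j; apply: (lt_le_trans (Hy j)); apply: minle2.
      rewrite !rowmaxE He1; last by move=> j; apply: (lt_le_trans (Hy0 j)); apply: minle1.
      rewrite He2; last by move=> j; apply: (lt_le_trans (Hy0 j)); apply: minle2.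
      split.
      * move=> _ Eq; exfalso; move: Eq; rewrite Rm Rp => -[E].
        by move: Lt; rewrite E ltxx.
      * move=> _; rewrite lee_fin.
        have := hmax_bound (fun j => Am i j + (x j)%:E == bmax (fun j0 => Am i j0 + (x j0)%:E))%E (fun j => y j - x j) _ (ex_intro _ jm Pjm) Hy3.
        have := hmax_bound (fun j => Ap i j + (x j)%:E == bmax (fun j0 => Ap i j0 + (x j0)%:E))%E (fun j => y j - x j) _ (ex_intro _ jp Pjp) Hy3.
        rewrite !ltr_norml.
        lra.
exists e; split=> // y Hy; split.
- by move=> Sy i; apply/(He i y Hy).
- by move=> K i; apply/(He i y Hy).
Qed.

Lemma Kmem_mono (phi : R -> R) (d : 'I_n -> R) : {homo phi : a b / a <= b} ->
  Kmem d -> Kmem (fun j => phi (d j)).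
Proof.
move=> hphi K i E1 E2 j Pj; have [j' Pj' le] := K i E1 E2 j Pj.
by exists j' => //; apply: hphi.
Qed.

Lemma hmax_scale (P : pred 'I_n) (d : 'I_n -> R) (c : R) j0 : P j0 -> 0 < c ->
  hmax P (fun j => c * d j) = c * hmax P d.
Proof.
move=> Pj0 c0; apply: hmax_eq.
have [[j1 P1 e1] H] := hmaxP P d j0 Pj0.
split; first by exists j1 => //; rewrite e1.
by move=> j Pj; rewrite ler_pM2l // H.
Qed.

Lemma g_scale (c : R) (d : 'I_n -> R) : 0 < c -> g (fun j => c * d j) = c * g d.
Proof.
move=> c0; rewrite /g mulrBr !mulr_sumr; congr (_ - _); apply: eq_bigr => k _.
  have [j0 Pj0] := NCne k.
  by rewrite (hmax_scale (NC k) d c j0 Pj0 c0) mulrCA.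
by rewrite mulrCA.
Qed.

Lemma g_const (d : 'I_n -> R) : (forall j j', d j = d j') -> g d = 0.
Proof.
move=> Hd; case: (pickP (fun _ : 'I_n => true)) => [j0 _|none].
  have hk : forall k, hmax (NC k) d = d j0.
    move=> k; apply: hmax_eq; have [j Pj] := NCne k.
    by split; [exists j => //; apply: Hd|move=> j' _; rewrite (Hd j' j0)].
  rewrite /g (eq_bigr (fun k => (mup k)%:R * d j0)); last by move=> k _; rewrite hk.
  rewrite (eq_bigr (fun j => (mum j)%:R * d j0)); last by move=> j _; rewrite (Hd j j0).
  by rewrite -!mulr_suml -!natr_sum Hsum subrr.
rewrite /g big1; last by move=> k _; have [j _] := NCne k; move: (none j).
by rewrite big1 ?subrr // => j _; move: (none j).
Qed.

Definition nonmax (d : 'I_n -> R) : {set 'I_n} := [set j | [exists j', d j < d j']].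

Lemma comb_step N : forall d, (#|nonmax d| <= N)%N -> Kmem d -> g d < 0 ->
  exists J : {set 'I_n}, Kmem (chi R J) /\ g (chi R J) < 0.
Proof.
elim: N => [|N IH] d cN Kd gd.
  exfalso; move: gd; rewrite g_const ?ltxx // => j j'.
  move: cN; rewrite leqn0 cards_eq0 => /eqP E0.
  have nj : forall a b, ~~ (d a < d b).
    move=> a b; have : a \notin nonmax d by rewrite E0 in_set0.
    by rewrite inE negb_exists => /forallP.
  by apply/le_anti; rewrite !leNgt !nj.
case: (set_0Vmem (nonmax d)) => [E0|[j0 Hj0]].
  by apply: (IH d) => //; rewrite E0 cards0.
move: (Hj0); rewrite inE => /existsP [j0' lt0].
have [[jt _ et] Ht] := hmaxP (fun _ => true) d j0 isT.
set t := hmax (fun _ => true) d in et Ht.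
have j0t : d j0 < t by apply: lt_le_trans lt0 (Ht _ isT).
have [[js Pjs es] Hs] := hmaxP (fun j => d j < t) d j0 j0t.
set s := hmax (fun j => d j < t) d in es Hs Pjs.
have st : s < t by rewrite es.
have fact1 : forall j, s < d j -> d j = t.
  move=> j sj; apply/le_anti; rewrite Ht //=; rewrite leNgt; apply/negP => djt.
  by move: (Hs j djt); rewrite leNgt sj.
set J := [set j | s < d j].
have chiE : forall j, chi R J j = if s < d j then 1 else 0 by move=> j; rewrite /chi inE.
set d' := fun j => Num.min (d j) s.
have KJ : Kmem (chi R J).
  have -> : chi R J = (fun j => (fun u => if s < u then 1 else 0) (d j)).
    by apply: functional_extensionality => j; rewrite chiE.
  apply: (Kmem_mono (fun u => if s < u then 1 else 0) d) => // a b ab.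
  case: ifP => sa; case: ifP => sb //.
  by move: sb; rewrite (lt_le_trans sa ab).
have Kd' : Kmem d'.
  apply: (Kmem_mono (fun u => Num.min u s) d) => // a b ab.
  by rewrite le_min !ge_min ab lexx orbT.
have hk : forall k, hmax (NC k) d = hmax (NC k) d' + (t - s) * hmax (NC k) (chi R J).
  move=> k; have [j0k Pk] := NCne k.
  have [[j1 P1 e1] H1] := hmaxP (NC k) d j0k Pk.
  have [sh|hs] := ltP s (hmax (NC k) d).
    have -> : hmax (NC k) (chi R J) = 1.
      apply: hmax_eq; split; first by exists j1 => //; rewrite chiE -e1 sh.
      by move=> j _; rewrite chiE; case: ifP => _ //; rewrite ler01.
    have -> : hmax (NC k) d' = s.
      apply: hmax_eq; split; first by exists j1 => //; rewrite /d' -e1 (min_r (ltW sh)).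
      by move=> j _; rewrite /d' ge_min lexx orbT.
    by rewrite e1 fact1 -?e1 //; ring.
  have -> : hmax (NC k) (chi R J) = 0.
    apply: hmax_eq; split; first by exists j1 => //; rewrite chiE -e1 ltNge hs.
    move=> j Pj; rewrite chiE ltNge (le_trans (H1 j Pj) hs) //.
  have -> : hmax (NC k) d' = hmax (NC k) d.
    apply: hmax_eq; split; first by exists j1 => //; rewrite /d' -e1 (min_l hs).
    by move=> j Pj; rewrite /d' ge_min H1.
  by rewrite mulr0 addr0.
have dj : forall j, d j = d' j + (t - s) * chi R J j.
  move=> j; rewrite chiE /d'; case: ifP => sj.
    by rewrite (min_r (ltW sj)) fact1 //; lra.
  by rewrite min_l ?mulr0 ?addr0 // leNgt sj.
have decomp : g d = g d' + (t - s) * g (chi R J).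
  rewrite /g.
  have -> : \sum_(k < p) (mup k)%:R * hmax (NC k) d = \sum_(k < p) (mup k)%:R * hmax (NC k) d' + (t - s) * \sum_(k < p) (mup k)%:R * hmax (NC k) (chi R J).
    by rewrite mulr_sumr -big_split; apply: eq_bigr => k _; rewrite hk mulrDr mulrCA.
  have -> : \sum_(j < n) (mum j)%:R * d j = \sum_(j < n) (mum j)%:R * d' j + (t - s) * \sum_(j < n) (mum j)%:R * chi R J j.
    by rewrite mulr_sumr -big_split; apply: eq_bigr => j _; rewrite {1}dj mulrDr mulrCA.
  ring.
have [gJ|gJ] := ltP (g (chi R J)) 0; first by exists J.
have gd' : g d' < 0.
  have : 0 <= (t - s) * g (chi R J) by apply: mulr_ge0 => //; lra.
  move: gd; rewrite decomp; lra.
apply: (IH d') => //.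
have pr : nonmax d' \proper nonmax d.
  apply/properP; split.
    apply/subsetP => j; rewrite !inE => /existsP [j' lt'].
    have djs : d j < s.
      have : Num.min (d j) s < s by apply: (lt_le_trans lt'); rewrite ge_min lexx orbT.
      by rewrite gt_min ltxx orbF.
    by apply/existsP; exists jt; rewrite -et; apply: lt_trans djs st.
  exists js.
    by rewrite inE; apply/existsP; exists jt; rewrite -et -es.
  rewrite inE negb_exists; apply/forallP => j'.
  by rewrite /d' -es minxx -leNgt ge_min lexx orbT.
by rewrite -ltnS; apply: leq_trans (proper_card pr) cN.
Qed.

Lemma main_sec : ~ local_opt Ap Am C mup mum x ->
  exists (J : {set 'I_n}) (delta' : R), 0 < delta' /\
    forall delta : R, 0 < delta -> delta < delta' ->
      inS Ap Am (fun j => x j + delta * chi R J j) /\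
      fobj C mup mum (fun j => x j + delta * chi R J j) < fobj C mup mum x.
Proof.
move=> nlo.
have [eF [eF0 HF]] := F_local.
have [eS [eS0 HS]] := S_local.
set e := Num.min eF eS.
have e0 : 0 < e by apply: minpos.
have [y [Sy [Hy ly]]] : exists y, inS Ap Am y /\ (forall j, `|y j - x j| < e) /\
    fobj C mup mum y < fobj C mup mum x.
  apply: NNPP => H; apply: nlo; split=> //; exists e; split=> // y Sy Hy.
  rewrite leNgt; apply/negP => ly; apply: H; exists y; split=> //; split=> // j.
  by rewrite distrC.
have Hy1 : forall j, `|y j - x j| < eF.
  by move=> j; apply: (lt_le_trans (Hy j)); apply: minle1.
have Hy2 : forall j, `|y j - x j| < eS.
  by move=> j; apply: (lt_le_trans (Hy j)); apply: minle2.
have Kd : Kmem (fun j => y j - x j) by apply/(HS y Hy2).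
have gd : g (fun j => y j - x j) < 0 by move: ly; rewrite (HF y Hy1); lra.
have [J [KJ gJ]] := comb_step _ _ (leqnn _) Kd gd.
exists J, e; split=> // dl dl0 dle.
have Ed : (fun j => (x j + dl * chi R J j) - x j) = (fun j => dl * chi R J j).
  by apply: functional_extensionality => j; rewrite addrAC subrr add0r.
have close : forall j, `|(x j + dl * chi R J j) - x j| < e.
  move=> j; rewrite addrAC subrr add0r /chi; case: (j \in J).
    by rewrite mulr1 gtr0_norm.
  by rewrite mulr0 normr0.
have c1 : forall j, `|(x j + dl * chi R J j) - x j| < eF.
  by move=> j; apply: (lt_le_trans (close j)); apply: minle1.
have c2 : forall j, `|(x j + dl * chi R J j) - x j| < eS.
  by move=> j; apply: (lt_le_trans (close j)); apply: minle2.
split.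
  apply/(HS _ c2); rewrite Ed.
  apply: (Kmem_mono (fun u => dl * u) (chi R J)) => // a b ab.
  by rewrite ler_pM2l.
rewrite (HF _ c1) Ed g_scale //.
have : dl * g (chi R J) < 0 by rewrite pmulr_rlt0.
lra.
Qed.

End Main.

Theorem theorem1p1 (R : realType) (m n p : nat)
  (Ap Am : 'M[\bar R]_(m, n)) (C : 'M[\bar R]_(p, n))
  (mup : 'I_p -> nat) (mum : 'I_n -> nat) :
  (forall i j, rmax_entry (Ap i j)) ->
  (forall i j, rmax_entry (Am i j)) ->
  (forall k j, rmax_entry (C k j)) ->
  (forall i : 'I_m, exists j : 'I_n, Amax Ap Am i j != -oo%E) ->
  (forall k : 'I_p, exists j : 'I_n, C k j != -oo%E) ->
  (\sum_(k < p) mup k = \sum_(j < n) mum j)%N ->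
  graph_connected (Amax Ap Am) C ->
  forall x : 'I_n -> R,
  inS Ap Am x ->
  ~ local_opt Ap Am C mup mum x ->
  exists (J : {set 'I_n}) (delta' : R), 0 < delta' /\
    forall delta : R, 0 < delta -> delta < delta' ->
      inS Ap Am (fun j => x j + delta * chi R J j) /\
      fobj C mup mum (fun j => x j + delta * chi R J j) < fobj C mup mum x.
Proof.
move=> HAp HAm HC _ HCrow Hs _ x xS nlo.
have := @main_sec R m n p Ap Am C mup mum x HAp HAm HC HCrow Hs xS nlo.
exact.
Qed.
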